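(* An HT-interpretation of the signature $\sigma_1$ is isomorphic to a standard HT-interpretation of $\sigma_1$ if and only if it is an $\omega$-model of $\mathit{Std}\cup\mathit{Defs}$.
   Context: Precomputed terms: a totally ordered set containing all numerals $\overline n$ ($n$ an integer, in 1-1 correspondence with the integers), all symbolic constants and possibly other symbols, in which numerals are contiguous and ordered as the integers. Formulas are two-sorted, with sort general and its subsort integer. Signature $\sigma_0$: numerals as integer object constants; other precomputed terms as general object constants; $|\cdot|,+,-,\times$ as function constants on integers; predicate constants $p/n$ (written $p(\mathbf t)$) with general arguments; binary predicate constants $\neq,<,>,\le,\ge$ (''comparison symbols'') with general arguments ($=$ is logical equality). $\sigma_1$ adds, for disjoint lists $\mathbf X,\mathbf V$ of distinct general variables and formula $F$ over $\sigma_0$ with free variables among $\mathbf X,\mathbf V$, predicate constants $\mathit{Atleast}^{\mathbf X;\mathbf V}_F,\mathit{Atmost}^{\mathbf X;\mathbf V}_F$ with $|\mathbf V|+1$ general arguments. Comparison symbols are extensional; $p/n$, $\mathit{Atleast}$, $\mathit{Atmost}$ are intensional. A standard interpretation of $\sigma_0$ has general domain the precomputed terms, integer domain the numerals, object constants denoting themselves, arithmetic symbols with their usual meaning and comparison symbols given by the order on precomputed terms. $\mathit{Std}$: all sentences over $\sigma_0$ without symbols $p/n$ satisfied by standard interpretations. $F^{\mathbf X}_{\mathbf t}$ is substitution. For a precomputed term $r$: $\exists_{\ge r}\mathbf X\,F$ is $\exists\mathbf X_1\cdots\mathbf X_n(\bigwedge_{i=1}^nF^{\mathbf X}_{\mathbf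 X_i}\wedge\bigwedge_{i<j}\neg(\mathbf X_i=\mathbf X_j))$ if $r=\overline n>\overline0$, $\top$ if $r\le\overline0$, $\bot$ if $r>\overline n$ for all $n$; $\exists_{\le r}\mathbf X\,F$ is $\forall\mathbf X_1\cdots\mathbf X_{n+1}(\bigwedge_{i=1}^{n+1}F^{\mathbf X}_{\mathbf X_i}\to\bigvee_{i<j}\mathbf X_i=\mathbf X_j)$ if $r=\overline n\ge\overline0$, $\bot$ if $r<\overline0$, $\top$ if $r>\overline n$ for all $n$. $\mathit{Defs}$: all sentences $\forall\mathbf V(\mathit{Atleast}^{\mathbf X;\mathbf V}_F(\mathbf V,r)\leftrightarrow\exists_{\ge r}\mathbf XF)$ and $\forall\mathbf V(\mathit{Atmost}^{\mathbf X;\mathbf V}_F(\mathbf V,r)\leftrightarrow\exists_{\le r}\mathbf XF)$. HT-interpretations: for an interpretation $I$ of $\sigma_1$ (domains: general, and integer a subset of it), $\sigma_1^I$ adds names $d^*$ for domain elements; $I^{\downarrow}$ is the set of atoms $p(\mathbf d^* )$ with $p$ intensional and $I\models p(\mathbf d^* )$; an HT-interpretation is $\langle\mathcal H,I\rangle$ with $\mathcal H\subseteq I^{\downarrow}$. $\models_{ht}$: intensional atoms $p(\mathbf t)$ hold iff $p(\mathbf d^* )\in\mathcal H$ for $\mathbf d$ the values of $\mathbf t$ in $I$; extensional atoms and equalities iff $I$ satisfies them; $\bot$ never; $\neg F$ iff $I\not\models F$; $\wedge,\vee$ componentwise; $F\to G$ iff ($\not\models_{ht}F$ or $\models_{ht}G$)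 and $I\models F\to G$; $\forall$/$\exists$ over all/some domain elements. An HT-interpretation $\langle\mathcal H,I\rangle$ of $\sigma_1$ is standard if the restriction of $I$ to $\sigma_0$ is standard and $\langle\mathcal H,I\rangle\models_{ht}\mathit{Defs}$. $I$ is an $\omega$-interpretation if every element of the general domain is the value of some precomputed term and every element of the integer domain is the value of some numeral; an $\omega$-model of a set $\Gamma$ of sentences is an HT-interpretation $\langle\mathcal H,I\rangle$ satisfying ($\models_{ht}$) all of $\Gamma$ with $I$ an $\omega$-interpretation. *)

(* Defs.v *)
From Stdlib Require Import ZArith List Arith.
Import ListNotations.
Set Implicit Arguments.

Record PTerms := {
  pt :> Type;
  ptle : pt -> pt -> Prop;
  ptle_refl : forall x, ptle x x;
  ptle_antisym : forall x y, ptle x y -> ptle y x -> x = y;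
  ptle_trans : forall x y z, ptle x y -> ptle y z -> ptle x z;
  ptle_total : forall x y, ptle x y \/ ptle y x;
  num : Z -> pt;
  num_le : forall a b, ptle (num a) (num b) <-> (a <= b)%Z;
  num_contig : forall a b x, ptle (num a) x -> ptle x (num b) ->
                 exists n, x = num n
}.

Definition ptlt (PT : PTerms) (x y : PT) : Prop := ptle PT x y /\ x <> y.

Inductive cmpop := CNe | CLt | CGt | CLe | CGe.

Inductive iterm :=
| INum (n : Z)
| IVar (v : nat)
| IAbs (t : iterm)
| IPlus (t u : iterm)
| IMinus (t u : iterm)
| ITimes (t u : iterm).

Inductive gterm (P : Type) :=
| GConst (c : P)
| GVar (v : nat)
| GInt (t : iterm).
Arguments GConst {P} c.
Arguments GVar {P} v.
Arguments GInt {P} t.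

Inductive form (P A : Type) :=
| FAtom (a : A) (ts : list (gterm P))
| FCmp (o : cmpop) (t u : gterm P)
| FEq (t u : gterm P)
| FBot
| FAnd (F G : form P A)
| FOr (F G : form P A)
| FImp (F G : form P A)
| FAllG (x : nat) (F : form P A)
| FExG (x : nat) (F : form P A)
| FAllI (x : nat) (F : form P A)
| FExI (x : nat) (F : form P A).
Arguments FAtom {P A} a ts.
Arguments FCmp {P A} o t u.
Arguments FEq {P A} t u.
Arguments FBot {P A}.
Arguments FAnd {P A} F G.
Arguments FOr {P A} F G.
Arguments FImp {P A} F G.
Arguments FAllG {P A} x F.
Arguments FExG {P A} x F.
Arguments FAllI {P A} x F.
Arguments FExI {P A} x F.

Definition FNeg {P A} (F : form P A) : form P A := FImp F FBot.
Definition FTop {P A} : form P A := FNeg FBot.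
Definition FIff {P A} (F G : form P A) : form P A := FAnd (FImp F G) (FImp G F).

(* sigma_0 atoms: predicate constants p/n, i.e. pairs (name, arity) *)
Definition sym0 (Nm : Type) := (Nm * nat)%type.
Definition form0 (P Nm : Type) := form P (sym0 Nm).

Inductive isym (P Nm : Type) :=
| IP (p : Nm) (n : nat)
| IAtleast (X V : list nat) (F : form0 P Nm)
| IAtmost (X V : list nat) (F : form0 P Nm).
Arguments IP {P Nm} p n.
Arguments IAtleast {P Nm} X V F.
Arguments IAtmost {P Nm} X V F.

Definition form1 (P Nm : Type) := form P (isym P Nm).

Section Syntax.
Context {P A : Type}.

Fixpoint itvars (t : iterm) : list nat :=
  match t with
  | INum _ => []
  | IVar v => [v]
  | IAbs t => itvars t
  | IPlus t u | IMinus t u | ITimes t u => itvars t ++ itvars u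
  end.

Definition gtvarsG (t : gterm P) : list nat :=
  match t with GVar v => [v] | _ => [] end.
Definition gtvarsI (t : gterm P) : list nat :=
  match t with GInt u => itvars u | _ => [] end.

Fixpoint fvG (F : form P A) : list nat :=
  match F with
  | FAtom _ ts => flat_map gtvarsG ts
  | FCmp _ t u | FEq t u => gtvarsG t ++ gtvarsG u
  | FBot => []
  | FAnd F G | FOr F G | FImp F G => fvG F ++ fvG G
  | FAllG x F | FExG x F => remove Nat.eq_dec x (fvG F)
  | FAllI _ F | FExI _ F => fvG F
  end.

Fixpoint fvI (F : form P A) : list nat :=
  match F with
  | FAtom _ ts => flat_map gtvarsI ts
  | FCmp _ t u | FEq t u => gtvarsI t ++ gtvarsI u
  | FBot => []
  | FAnd F G | FOr F G | FImp F G => fvI F ++ fvI G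
  | FAllG _ F | FExG _ F => fvI F
  | FAllI x F | FExI x F => remove Nat.eq_dec x (fvI F)
  end.

Fixpoint avG (F : form P A) : list nat :=
  match F with
  | FAtom _ ts => flat_map gtvarsG ts
  | FCmp _ t u | FEq t u => gtvarsG t ++ gtvarsG u
  | FBot => []
  | FAnd F G | FOr F G | FImp F G => avG F ++ avG G
  | FAllG x F | FExG x F => x :: avG F
  | FAllI _ F | FExI _ F => avG F
  end.

Definition closed (F : form P A) : Prop := fvG F = [] /\ fvI F = [].

Fixpoint no_atoms (F : form P A) : Prop :=
  match F with
  | FAtom _ _ => False
  | FCmp _ _ _ | FEq _ _ | FBot => True
  | FAnd F G | FOr F G | FImp F G => no_atoms F /\ no_atoms G
  | FAllG _ F | FExG _ F | FAllI _ F | FExI _ F => no_atoms F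
  end.

Fixpoint wf (ar : A -> nat -> Prop) (F : form P A) : Prop :=
  match F with
  | FAtom a ts => ar a (length ts)
  | FCmp _ _ _ | FEq _ _ | FBot => True
  | FAnd F G | FOr F G | FImp F G => wf ar F /\ wf ar G
  | FAllG _ F | FExG _ F | FAllI _ F | FExI _ F => wf ar F
  end.

(* renaming of free general variables (used only with fresh targets,
   so no capture can occur) *)
Definition rn_gt (f : nat -> nat) (t : gterm P) : gterm P :=
  match t with GVar v => GVar (f v) | t => t end.

Definition upd_id (f : nat -> nat) (x : nat) : nat -> nat :=
  fun y => if Nat.eqb y x then y else f y.

Fixpoint rename (f : nat -> nat) (F : form P A) : form P A :=
  match F with
  | FAtom a ts => FAtom a (map (rn_gt f) ts)
  | FCmp o t u => FCmp o (rn_gt f t) (rn_gt f u)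
  | FEq t u => FEq (rn_gt f t) (rn_gt f u)
  | FBot => FBot
  | FAnd F G => FAnd (rename f F) (rename f G)
  | FOr F G => FOr (rename f F) (rename f G)
  | FImp F G => FImp (rename f F) (rename f G)
  | FAllG x F => FAllG x (rename (upd_id f x) F)
  | FExG x F => FExG x (rename (upd_id f x) F)
  | FAllI x F => FAllI x (rename f F)
  | FExI x F => FExI x (rename f F)
  end.

Definition submap (X Y : list nat) (v : nat) : nat :=
  match find (fun p => Nat.eqb (fst p) v) (combine X Y) with
  | Some (_, y) => y
  | None => v
  end.

Definition substv (X Y : list nat) (F : form P A) : form P A :=
  rename (submap X Y) F.

Definition exG (xs : list nat) (F : form P A) : form P A := fold_right FExG F xs.
Definition allG (xs : list nat) (F : form P A) : form P A := fold_right FAllG F xs.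
Definition bigand (l : list (form P A)) : form P A := fold_right FAnd FTop l.
Definition bigor (l : list (form P A)) : form P A := fold_right FOr FBot l.

Definition teq (Y Z : list nat) : form P A :=
  bigand (map (fun p => FEq (GVar (fst p)) (GVar (snd p))) (combine Y Z)).

Fixpoint pairs {T : Type} (l : list T) : list (T * T) :=
  match l with
  | [] => []
  | x :: l' => map (fun y => (x, y)) l' ++ pairs l'
  end.

End Syntax.

Fixpoint lift0 {P Nm : Type} (F : form0 P Nm) : form1 P Nm :=
  match F with
  | FAtom (p, n) ts => FAtom (IP p n) ts
  | FCmp o t u => FCmp o t u
  | FEq t u => FEq t u
  | FBot => FBot
  | FAnd F G => FAnd (lift0 F) (lift0 G)
  | FOr F G => FOr (lift0 F) (lift0 G)
  | FImp F G => FImp (lift0 F) (lift0 G)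
  | FAllG x F => FAllG x (lift0 F)
  | FExG x F => FExG x (lift0 F)
  | FAllI x F => FAllI x (lift0 F)
  | FExI x F => FExI x (lift0 F)
  end.

Definition ar0 {Nm : Type} (s : sym0 Nm) (k : nat) : Prop := k = snd s.

(* the sigma_1 symbols Atleast^{X;V}_F / Atmost^{X;V}_F exist only for
   disjoint lists X, V of distinct general variables and a sigma_0
   formula F with free variables among X, V *)
Definition valid_XVF {P Nm : Type} (X V : list nat) (F : form0 P Nm) : Prop :=
  NoDup X /\ NoDup V /\ (forall v, In v X -> ~ In v V) /\
  wf ar0 F /\ (forall v, In v (fvG F) -> In v X \/ In v V) /\ fvI F = [].

Definition valid_isym {P Nm : Type} (a : isym P Nm) : Prop :=
  match a with
  | IP _ _ => True
  | IAtleast X V F | IAtmost X V F => valid_XVF X V F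
  end.

Definition arity {P Nm : Type} (a : isym P Nm) : nat :=
  match a with
  | IP _ n => n
  | IAtleast _ V _ | IAtmost _ V _ => length V + 1
  end.

Definition ar1 {P Nm : Type} (a : isym P Nm) (k : nat) : Prop :=
  valid_isym a /\ k = arity a.

Section Counting.
Context {PT : PTerms} {Nm : Type}.

(* Ys : the lists X_1, ..., X_n of new variables; they are taken fresh
   (distinct, disjoint from each other, from X, V and from all variables
   of F), so that F^X_{X_i} is capture-free *)
Definition fresh_lists (X V : list nat) (F : form0 PT Nm)
    (Ys : list (list nat)) (n : nat) : Prop :=
  length Ys = n /\ (forall Y, In Y Ys -> length Y = length X) /\
  NoDup (concat Ys) /\
  (forall v, In v (concat Ys) -> ~ In v (avG F) /\ ~ In v X /\ ~ In v V).

Definition ex_ge_body (X : list nat) (F : form0 PT Nm) (Ys : list (list nat))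
  : form1 PT Nm :=
  exG (concat Ys)
    (FAnd (bigand (map (fun Y => substv X Y (lift0 F)) Ys))
          (bigand (map (fun p => FNeg (teq (fst p) (snd p))) (pairs Ys)))).

Definition ex_le_body (X : list nat) (F : form0 PT Nm) (Ys : list (list nat))
  : form1 PT Nm :=
  allG (concat Ys)
    (FImp (bigand (map (fun Y => substv X Y (lift0 F)) Ys))
          (bigor (map (fun p => teq (fst p) (snd p)) (pairs Ys)))).

(* B is (a renaming-variant of) \exists_{>= r} X F *)
Definition ExGe (r : PT) (X V : list nat) (F : form0 PT Nm) (B : form1 PT Nm)
  : Prop :=
  (exists n Ys, r = num PT n /\ (0 < n)%Z /\
      fresh_lists X V F Ys (Z.to_nat n) /\ B = ex_ge_body X F Ys)
  \/ (ptle PT r (num PT 0) /\ B = FTop)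
  \/ ((forall n, ptlt PT (num PT n) r) /\ B = FBot).

(* B is (a renaming-variant of) \exists_{<= r} X F *)
Definition ExLe (r : PT) (X V : list nat) (F : form0 PT Nm) (B : form1 PT Nm)
  : Prop :=
  (exists n Ys, r = num PT n /\ (0 <= n)%Z /\
      fresh_lists X V F Ys (Z.to_nat n + 1) /\ B = ex_le_body X F Ys)
  \/ (ptlt PT r (num PT 0) /\ B = FBot)
  \/ ((forall n, ptlt PT (num PT n) r) /\ B = FTop).

Definition Defs (G : form1 PT Nm) : Prop :=
  (exists X V F r B, valid_XVF X V F /\ ExGe r X V F B /\
     G = allG V (FIff (FAtom (IAtleast X V F) (map GVar V ++ [GConst r])) B))
  \/
  (exists X V F r B, valid_XVF X V F /\ ExLe r X V F B /\
     G = allG V (FIff (FAtom (IAtmost X V F) (map GVar V ++ [GConst r])) B)).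

End Counting.

Record interp (PT : PTerms) (Nm D : Type) := {
  isInt : D -> Prop;
  cval : PT -> D;
  cval_int : forall n, isInt (cval (num PT n));
  fabs : {d : D | isInt d} -> {d : D | isInt d};
  fplus : {d : D | isInt d} -> {d : D | isInt d} -> {d : D | isInt d};
  fminus : {d : D | isInt d} -> {d : D | isInt d} -> {d : D | isInt d};
  ftimes : {d : D | isInt d} -> {d : D | isInt d} -> {d : D | isInt d};
  fcmp : cmpop -> D -> D -> Prop;
  fpred : isym PT Nm -> list D -> Prop
}.

Definition Dint {PT Nm D} (I : interp PT Nm D) := {d : D | isInt I d}.

Record htinterp (PT : PTerms) (Nm D : Type) := {
  htI : interp PT Nm D;
  htH : isym PT Nm -> list D -> Prop;
  htH_sub : forall a ds, htH a ds -> fpred htI a ds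
}.

Unset Implicit Arguments.
Section Semantics.
Context {PT : PTerms} {Nm D : Type}.

Definition upd_env {T : Type} (e : nat -> T) (x : nat) (d : T) : nat -> T :=
  fun y => if Nat.eqb y x then d else e y.

Fixpoint ieval (I : interp PT Nm D) (ie : nat -> Dint I) (t : iterm) : Dint I :=
  match t with
  | INum n => exist _ (cval I (num PT n)) (cval_int I n)
  | IVar v => ie v
  | IAbs t => fabs I (ieval I ie t)
  | IPlus t u => fplus I (ieval I ie t) (ieval I ie u)
  | IMinus t u => fminus I (ieval I ie t) (ieval I ie u)
  | ITimes t u => ftimes I (ieval I ie t) (ieval I ie u)
  end.

Definition geval (I : interp PT Nm D) (ge : nat -> D) (ie : nat -> Dint I)
    (t : gterm PT) : D :=
  match t with
  | GConst c => cval I c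
  | GVar v => ge v
  | GInt u => proj1_sig (ieval I ie u)
  end.


Fixpoint sat_cl (I : interp PT Nm D) (ge : nat -> D) (ie : nat -> Dint I)
    (F : form1 PT Nm) : Prop :=
  match F with
  | FAtom a ts => fpred I a (map (geval I ge ie) ts)
  | FCmp o t u => fcmp I o (geval I ge ie t) (geval I ge ie u)
  | FEq t u => geval I ge ie t = geval I ge ie u
  | FBot => False
  | FAnd F G => sat_cl I ge ie F /\ sat_cl I ge ie G
  | FOr F G => sat_cl I ge ie F \/ sat_cl I ge ie G
  | FImp F G => sat_cl I ge ie F -> sat_cl I ge ie G
  | FAllG x F => forall d : D, sat_cl I (upd_env ge x d) ie F
  | FExG x F => exists d : D, sat_cl I (upd_env ge x d) ie F
  | FAllI x F => forall d : Dint I, sat_cl I ge (upd_env ie x d) F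
  | FExI x F => exists d : Dint I, sat_cl I ge (upd_env ie x d) F
  end.


Fixpoint sat_ht (M : htinterp PT Nm D) (ge : nat -> D) (ie : nat -> Dint (htI M))
    (F : form1 PT Nm) : Prop :=
  match F with
  | FAtom a ts => htH M a (map (geval (htI M) ge ie) ts)
  | FCmp o t u => fcmp (htI M) o (geval (htI M) ge ie t) (geval (htI M) ge ie u)
  | FEq t u => geval (htI M) ge ie t = geval (htI M) ge ie u
  | FBot => False
  | FAnd F G => sat_ht M ge ie F /\ sat_ht M ge ie G
  | FOr F G => sat_ht M ge ie F \/ sat_ht M ge ie G
  | FImp F G => (~ sat_ht M ge ie F \/ sat_ht M ge ie G) /\
                sat_cl (htI M) ge ie (FImp F G)
  | FAllG x F => forall d : D, sat_ht M (upd_env ge x d) ie F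
  | FExG x F => exists d : D, sat_ht M (upd_env ge x d) ie F
  | FAllI x F => forall d : Dint (htI M), sat_ht M ge (upd_env ie x d) F
  | FExI x F => exists d : Dint (htI M), sat_ht M ge (upd_env ie x d) F
  end.


(* satisfaction of a sentence (closed formula): independent of the
   assignment, stated for all assignments *)
Definition sat_cl_sent (I : interp PT Nm D) (F : form1 PT Nm) : Prop :=
  forall ge ie, sat_cl I ge ie F.

Definition sat_ht_sent (M : htinterp PT Nm D) (F : form1 PT Nm) : Prop :=
  forall ge ie, sat_ht M ge ie F.

Definition omega_interp (I : interp PT Nm D) : Prop :=
  (forall d : D, exists c : PT, cval I c = d) /\
  (forall d : D, isInt I d -> exists n : Z, d = cval I (num PT n)).

Definition omega_model (M : htinterp PT Nm D) (Gamma : form1 PT Nm -> Prop)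
  : Prop :=
  omega_interp (htI M) /\ forall G, Gamma G -> sat_ht_sent M G.

End Semantics.
Set Implicit Arguments.

Section Standard.
Context {PT : PTerms} {Nm : Type}.

(* the restriction of J to sigma_0 is standard *)
Definition standard_interp (J : interp PT Nm PT) : Prop :=
  (forall d, isInt J d <-> exists n, d = num PT n) /\
  (forall c, cval J c = c) /\
  (forall (x : Dint J) n, proj1_sig x = num PT n ->
      proj1_sig (fabs J x) = num PT (Z.abs n)) /\
  (forall (x y : Dint J) m n, proj1_sig x = num PT m -> proj1_sig y = num PT n ->
      proj1_sig (fplus J x y) = num PT (m + n)) /\
  (forall (x y : Dint J) m n, proj1_sig x = num PT m -> proj1_sig y = num PT n ->
      proj1_sig (fminus J x y) = num PT (m - n)) /\
  (forall (x y : Dint J) m n, proj1_sig x = num PT m -> proj1_sig y = num PT n ->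
      proj1_sig (ftimes J x y) = num PT (m * n)) /\
  (forall d e, fcmp J CNe d e <-> d <> e) /\
  (forall d e, fcmp J CLt d e <-> ptlt PT d e) /\
  (forall d e, fcmp J CGt d e <-> ptlt PT e d) /\
  (forall d e, fcmp J CLe d e <-> ptle PT d e) /\
  (forall d e, fcmp J CGe d e <-> ptle PT e d).

Definition Std (G : form1 PT Nm) : Prop :=
  no_atoms G /\ closed G /\
  forall J : interp PT Nm PT, standard_interp J -> sat_cl_sent J G.

Definition standard_ht (M : htinterp PT Nm PT) : Prop :=
  standard_interp (htI M) /\ forall G, @Defs PT Nm G -> sat_ht_sent M G.

End Standard.

Definition ht_iso {PT : PTerms} {Nm D D' : Type}
    (M : htinterp PT Nm D) (M' : htinterp PT Nm D') (h : D -> D') : Prop :=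
  let I := htI M in let I' := htI M' in
  (forall x y, h x = h y -> x = y) /\
  (forall y, exists x, h x = y) /\
  (forall d, isInt I d <-> isInt I' (h d)) /\
  (forall c, h (cval I c) = cval I' c) /\
  (forall (x : Dint I) (x' : Dint I'), proj1_sig x' = h (proj1_sig x) ->
      proj1_sig (fabs I' x') = h (proj1_sig (fabs I x))) /\
  (forall (x y : Dint I) (x' y' : Dint I'),
      proj1_sig x' = h (proj1_sig x) -> proj1_sig y' = h (proj1_sig y) ->
      proj1_sig (fplus I' x' y') = h (proj1_sig (fplus I x y))) /\
  (forall (x y : Dint I) (x' y' : Dint I'),
      proj1_sig x' = h (proj1_sig x) -> proj1_sig y' = h (proj1_sig y) ->
      proj1_sig (fminus I' x' y') = h (proj1_sig (fminus I x y))) /\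
  (forall (x y : Dint I) (x' y' : Dint I'),
      proj1_sig x' = h (proj1_sig x) -> proj1_sig y' = h (proj1_sig y) ->
      proj1_sig (ftimes I' x' y') = h (proj1_sig (ftimes I x y))) /\
  (forall o d e, fcmp I o d e <-> fcmp I' o (h d) (h e)) /\
  (forall (a : isym PT Nm) ds, valid_isym a -> length ds = arity a ->
      (fpred I a ds <-> fpred I' a (map h ds)) /\
      (htH M a ds <-> htH M' a (map h ds))).

Definition ht_isomorphic {PT : PTerms} {Nm D D' : Type}
    (M : htinterp PT Nm D) (M' : htinterp PT Nm D') : Prop :=
  exists h, ht_iso M M' h.

(* Main.v *)
Require Import Defs.
From Stdlib Require Import ZArith List Arith Lia Classical ProofIrrelevance ClassicalEpsilon.
Import ListNotations.

Lemma ieval_iso (PT : PTerms) (Nm D D' : Type) (M : htinterp PT Nm D) (M' : htinterp PT Nm D') h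
  (Hiso : ht_iso M M' h) ie ie' :
  (forall v, proj1_sig (ie' v) = h (proj1_sig (ie v))) ->
  forall t, proj1_sig (ieval (htI M') ie' t) = h (proj1_sig (ieval (htI M) ie t)).
Proof.
  destruct Hiso as [Hinj [Hsur [Hint [Hc [Habs [Hplus [Hminus [Htimes [Hcmp Hatom]]]]]]]]].
  intros Hie t; induction t; simpl; auto.
Qed.

Lemma geval_iso (PT : PTerms) (Nm D D' : Type) (M : htinterp PT Nm D) (M' : htinterp PT Nm D') h
  (Hiso : ht_iso M M' h) ge ge' ie ie' :
  (forall v, h (ge v) = ge' v) ->
  (forall v, proj1_sig (ie' v) = h (proj1_sig (ie v))) ->
  forall t, geval (htI M') ge' ie' t = h (geval (htI M) ge ie t).
Proof.
  intros Hge Hie t. destruct t; simpl.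
  - destruct Hiso as [_ [_ [_ [Hc _]]]]. auto.
  - auto.
  - apply (ieval_iso _ _ _ _ _ _ _ Hiso); auto.
Qed.

Lemma transfer (PT : PTerms) (Nm D D' : Type) (M : htinterp PT Nm D) (M' : htinterp PT Nm D') h
  (Hiso : ht_iso M M' h) (F : form1 PT Nm) : wf ar1 F ->
  forall ge ge' ie ie',
  (forall v, h (ge v) = ge' v) ->
  (forall v, proj1_sig (ie' v) = h (proj1_sig (ie v))) ->
  (sat_cl (htI M) ge ie F <-> sat_cl (htI M') ge' ie' F) /\
  (sat_ht M ge ie F <-> sat_ht M' ge' ie' F).
Proof.
  pose proof Hiso as Hiso0.
  destruct Hiso as [Hinj [Hsur [Hint [Hc [Habs [Hplus [Hminus [Htimes [Hcmp Hatom]]]]]]]]].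
  induction F; simpl; intros Hwf ge ge' ie ie' Hge Hie.
  - destruct Hwf as [Hv Hl].
    assert (E : map (geval (htI M') ge' ie') ts = map h (map (geval (htI M) ge ie) ts)).
    { rewrite map_map. apply map_ext. intro t. apply (geval_iso _ _ _ _ _ _ _ Hiso0); auto. }
    rewrite E. rewrite <- (length_map (geval (htI M) ge ie)) in Hl.
    destruct (Hatom a _ Hv Hl) as [H1 H2]. split; assumption.
  - rewrite !(geval_iso _ _ _ _ _ _ _ Hiso0 ge ge' ie ie' Hge Hie). split; apply Hcmp.
  - rewrite !(geval_iso _ _ _ _ _ _ _ Hiso0 ge ge' ie ie' Hge Hie).
    split; split; intro E; try congruence; apply Hinj; auto.
  - tauto.
  - destruct Hwf as [W1 W2].
    destruct (IHF1 W1 ge ge' ie ie' Hge Hie); destruct (IHF2 W2 ge ge' ie ie' Hge Hie). tauto.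
  - destruct Hwf as [W1 W2].
    destruct (IHF1 W1 ge ge' ie ie' Hge Hie); destruct (IHF2 W2 ge ge' ie ie' Hge Hie). tauto.
  - destruct Hwf as [W1 W2].
    destruct (IHF1 W1 ge ge' ie ie' Hge Hie); destruct (IHF2 W2 ge ge' ie ie' Hge Hie). tauto.
  - assert (K : forall d d', h d = d' -> 
      (sat_cl (htI M) (upd_env ge x d) ie F <-> sat_cl (htI M') (upd_env ge' x d') ie' F) /\
      (sat_ht M (upd_env ge x d) ie F <-> sat_ht M' (upd_env ge' x d') ie' F)).
    { intros d d' Hd. apply IHF; auto. intro v. unfold upd_env. destruct (Nat.eqb v x); auto. }
    split; split; intros H d'.
    all: try (destruct (Hsur d') as [d Hd]; apply (K d d' Hd); apply H).
    all: apply (K d' (h d') eq_refl); apply H.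
  - assert (K : forall d d', h d = d' -> 
      (sat_cl (htI M) (upd_env ge x d) ie F <-> sat_cl (htI M') (upd_env ge' x d') ie' F) /\
      (sat_ht M (upd_env ge x d) ie F <-> sat_ht M' (upd_env ge' x d') ie' F)).
    { intros d d' Hd. apply IHF; auto. intro v. unfold upd_env. destruct (Nat.eqb v x); auto. }
    split; split; intros [d H].
    all: try (exists (h d); apply (K d (h d) eq_refl); apply H).
    all: destruct (Hsur d) as [d0 Hd]; exists d0; apply (K d0 d Hd); apply H.
  - assert (K : forall (d : Dint (htI M)) (d' : Dint (htI M')), proj1_sig d' = h (proj1_sig d) -> 
      (sat_cl (htI M) ge (upd_env ie x d) F <-> sat_cl (htI M') ge' (upd_env ie' x d') F) /\
      (sat_ht M ge (upd_env ie x d) F <-> sat_ht M' ge' (upd_env ie' x d') F)).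
    { intros d d' Hd. apply IHF; auto. intro v. unfold upd_env. destruct (Nat.eqb v x); auto. }
    assert (Fw : forall d : Dint (htI M), {d' : Dint (htI M') | proj1_sig d' = h (proj1_sig d)}).
    { intros [d0 p]. exists (exist _ (h d0) (proj1 (Hint d0) p)). reflexivity. }
    assert (Bw : forall d' : Dint (htI M'), exists d : Dint (htI M), proj1_sig d' = h (proj1_sig d)).
    { intros [d0 p]. destruct (Hsur d0) as [d1 E]. subst d0.
      exists (exist _ d1 (proj2 (Hint d1) p)). reflexivity. }
    split; split; intros H d'.
    all: try (destruct (Bw d') as [d Hd]; apply (K d d' Hd); apply H).
    all: destruct (Fw d') as [d Hd]; apply (K d' d Hd); apply H.
  - assert (K : forall (d : Dint (htI M)) (d' : Dint (htI M')), proj1_sig d' = h (proj1_sig d) -> 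
      (sat_cl (htI M) ge (upd_env ie x d) F <-> sat_cl (htI M') ge' (upd_env ie' x d') F) /\
      (sat_ht M ge (upd_env ie x d) F <-> sat_ht M' ge' (upd_env ie' x d') F)).
    { intros d d' Hd. apply IHF; auto. intro v. unfold upd_env. destruct (Nat.eqb v x); auto. }
    assert (Fw : forall d : Dint (htI M), {d' : Dint (htI M') | proj1_sig d' = h (proj1_sig d)}).
    { intros [d0 p]. exists (exist _ (h d0) (proj1 (Hint d0) p)). reflexivity. }
    assert (Bw : forall d' : Dint (htI M'), exists d : Dint (htI M), proj1_sig d' = h (proj1_sig d)).
    { intros [d0 p]. destruct (Hsur d0) as [d1 E]. subst d0.
      exists (exist _ d1 (proj2 (Hint d1) p)). reflexivity. }
    split; split; intros [d H].
    all: try (destruct (Fw d) as [d' Hd]; exists d'; apply (K d d' Hd); apply H).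
    all: destruct (Bw d) as [d0 Hd]; exists d0; apply (K d0 d Hd); apply H.
Qed.

Lemma wf_rename {P A : Type} (ar : A -> nat -> Prop) (F : form P A) :
  forall f, wf ar F -> wf ar (rename f F).
Proof.
  induction F; simpl; intros f H; try (split; destruct H; auto); auto.
  rewrite length_map; auto.
Qed.

Lemma wf_lift0 {P Nm : Type} (F : form0 P Nm) : wf ar0 F -> wf ar1 (lift0 F).
Proof.
  induction F; simpl; intros H; try tauto; auto.
  destruct a as [p n]. simpl. unfold ar0 in H. simpl in H. split; simpl; auto.
Qed.

Lemma wf_bigand {P A : Type} (ar : A -> nat -> Prop) (l : list (form P A)) :
  (forall F, In F l -> wf ar F) -> wf ar (bigand l).
Proof.
  induction l; simpl; intros H.
  - unfold FTop, FNeg; simpl; auto.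
  - split; auto.
Qed.

Lemma wf_bigor {P A : Type} (ar : A -> nat -> Prop) (l : list (form P A)) :
  (forall F, In F l -> wf ar F) -> wf ar (bigor l).
Proof.
  induction l; simpl; intros H; auto.
Qed.

Lemma wf_exG {P A : Type} (ar : A -> nat -> Prop) xs (F : form P A) :
  wf ar F -> wf ar (exG xs F).
Proof. induction xs; simpl; auto. Qed.

Lemma wf_allG {P A : Type} (ar : A -> nat -> Prop) xs (F : form P A) :
  wf ar F -> wf ar (allG xs F).
Proof. induction xs; simpl; auto. Qed.

Lemma wf_teq {P A : Type} (ar : A -> nat -> Prop) Y Z : wf ar (@teq P A Y Z).
Proof.
  unfold teq. apply wf_bigand. intros F HF. apply in_map_iff in HF.
  destruct HF as [p [<- _]]. simpl; auto.
Qed.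

Lemma wf_Defs (PT : PTerms) (Nm : Type) (G : form1 PT Nm) : Defs G -> wf ar1 G.
Proof.
  assert (Hsub : forall (X : list nat) (F : form0 PT Nm) Ys, wf ar0 F ->
    wf ar1 (bigand (map (fun Y => substv X Y (lift0 F)) Ys))).
  { intros X F Ys W. apply wf_bigand. intros F' HF. apply in_map_iff in HF.
    destruct HF as [Y [<- _]]. unfold substv. apply wf_rename, wf_lift0; auto. }
  intros [[X [V [F [r [B [Hv [HB ->]]]]]]] | [X [V [F [r [B [Hv [HB ->]]]]]]]];
  apply wf_allG; simpl; unfold ar1; simpl;
  (assert (wf ar1 B) by
    (destruct Hv as [_ [_ [_ [W _]]]];
     destruct HB as [[n [Ys [_ [_ [_ ->]]]]] | [[_ ->] | [_ ->]]];
     [ unfold ex_ge_body, ex_le_body; apply wf_exG || apply wf_allG; simpl; split;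
       [ apply Hsub; auto
       | first [ apply wf_bigand | apply wf_bigor ]; intros F' HF; apply in_map_iff in HF;
         destruct HF as [p [<- _]]; simpl; try split; auto; apply wf_teq ]
     | unfold FTop, FNeg; simpl; auto | unfold FTop, FNeg; simpl; auto ]));
  rewrite length_app, length_map; simpl; tauto.
Qed.

Lemma ht_noatoms (PT : PTerms) (Nm D : Type) (M : htinterp PT Nm D) (F : form1 PT Nm) :
  no_atoms F -> forall ge ie, sat_ht M ge ie F <-> sat_cl (htI M) ge ie F.
Proof.
  induction F; simpl; intros Hn ge ie; try tauto.
  - destruct Hn as [H1 H2]. rewrite IHF1, IHF2 by auto. tauto.
  - destruct Hn as [H1 H2]. rewrite IHF1, IHF2 by auto. tauto.
  - destruct Hn as [H1 H2]. rewrite IHF1, IHF2 by auto.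
    split; [tauto|]. intro H. split; auto. destruct (classic (sat_cl (htI M) ge ie F1)); tauto.
  - split; intros H d; apply IHF; auto.
  - split; intros [d H]; exists d; apply IHF; auto.
  - split; intros H d; apply IHF; auto.
  - split; intros [d H]; exists d; apply IHF; auto.
Qed.

Lemma forward (PT : PTerms) (Nm D : Type) (M : htinterp PT Nm D) :
  (exists S : htinterp PT Nm PT, standard_ht S /\ ht_isomorphic M S) ->
  omega_model M (fun G => Std G \/ Defs G).
Proof.
  intros [S [[Hstd HDefs] [h Hiso]]].
  pose proof Hiso as Hiso0.
  destruct Hiso as [Hinj [Hsur [Hint [Hc [Habs [Hplus [Hminus [Htimes [Hcmp Hatom]]]]]]]]].
  pose proof Hstd as Hstd0. destruct Hstd as [SInt [SC _]].
  split; [split|].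
  - intro d. exists (h d). apply Hinj. rewrite Hc, SC. reflexivity.
  - intros d Hd. apply Hint, SInt in Hd. destruct Hd as [n Hn]. exists n.
    apply Hinj. rewrite Hc, SC. auto.
  - assert (Gen : forall G, wf ar1 G -> sat_ht_sent S G -> sat_ht_sent M G).
    { intros G W HS ge ie.
      set (ie' := fun v => exist (isInt (htI S)) (h (proj1_sig (ie v))) (proj1 (Hint _) (proj2_sig (ie v)))).
      apply (proj2 (transfer _ _ _ _ _ _ _ Hiso0 G W ge (fun v => h (ge v)) ie ie'
              (fun v => eq_refl) (fun v => eq_refl))).
      apply HS. }
    intros G [[Hna [Hcl HJ]] | HD].
    + apply Gen.
      * clear -Hna. induction G; simpl in *; tauto.
      * intros ge ie. apply ht_noatoms; auto. apply HJ. exact Hstd0.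
    + apply Gen; auto. apply wf_Defs; auto.
Qed.

Definition stdcmp (PT : PTerms) (o : cmpop) (d e : PT) : Prop :=
  match o with
  | CNe => d <> e | CLt => ptlt PT d e | CGt => ptlt PT e d
  | CLe => ptle PT d e | CGe => ptle PT e d end.

Definition isIntS (PT : PTerms) (d : PT) : Prop := exists n, d = num PT n.

Definition getn (PT : PTerms) (x : {d : PT | isIntS PT d}) : Z :=
  proj1_sig (constructive_indefinite_description _ (proj2_sig x)).

Lemma getn_spec (PT : PTerms) x : proj1_sig x = num PT (getn PT x).
Proof. unfold getn. destruct (constructive_indefinite_description _ _). auto. Qed.

Lemma num_inj (PT : PTerms) a b : num PT a = num PT b -> a = b.
Proof.
  intro E. pose proof (proj1 (num_le PT a b)) as H1. pose proof (proj1 (num_le PT b a)) as H2.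
  rewrite E in H1, H2. specialize (H1 (ptle_refl _ _)). specialize (H2 (ptle_refl _ _)). lia.
Qed.

Lemma getn_eq (PT : PTerms) x n : proj1_sig x = num PT n -> getn PT x = n.
Proof. intro E. apply (num_inj PT). rewrite <- (getn_spec PT x). auto. Qed.

Definition mkI (PT : PTerms) (n : Z) : {d : PT | isIntS PT d} :=
  exist _ (num PT n) (ex_intro _ n eq_refl).

Definition SI (PT : PTerms) (Nm D : Type) (M : htinterp PT Nm D) : interp PT Nm PT :=
  {| isInt := isIntS PT;
     cval := fun c => c;
     cval_int := fun n => ex_intro _ n eq_refl;
     fabs := fun x => mkI PT (Z.abs (getn PT x));
     fplus := fun x y => mkI PT (getn PT x + getn PT y);
     fminus := fun x y => mkI PT (getn PT x - getn PT y);
     ftimes := fun x y => mkI PT (getn PT x * getn PT y);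
     fcmp := stdcmp PT;
     fpred := fun a ds => fpred (htI M) a (map (cval (htI M)) ds) |}.

Definition SM (PT : PTerms) (Nm D : Type) (M : htinterp PT Nm D) : htinterp PT Nm PT :=
  {| htI := SI PT Nm D M;
     htH := fun a ds => htH M a (map (cval (htI M)) ds);
     htH_sub := fun a ds H => htH_sub M a _ H |}.

Lemma SI_standard (PT : PTerms) (Nm D : Type) (M : htinterp PT Nm D) :
  standard_interp (SI PT Nm D M).
Proof.
  repeat split; simpl; auto; intros; unfold stdcmp in *; auto.
  all: try (rewrite (getn_eq _ _ _ H); try rewrite (getn_eq _ _ _ H0); reflexivity).
  all: try (exists d; reflexivity).
  all: firstorder.


Qed.

Lemma std_interp_cmp (PT : PTerms) (Nm : Type) (J : interp PT Nm PT) :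
  standard_interp J -> forall o d e, fcmp J o d e <-> stdcmp PT o d e.
Proof.
  intros [_ [_ [_ [_ [_ [_ [H1 [H2 [H3 [H4 H5]]]]]]]]]] o; destruct o; simpl; auto.
Qed.

Lemma backward (PT : PTerms) (Nm D : Type) (M : htinterp PT Nm D) :
  omega_model M (fun G => Std G \/ Defs G) ->
  (exists S : htinterp PT Nm PT, standard_ht S /\ ht_isomorphic M S).
Proof.
  intros [[Hsurj Hintom] Hsat].
  set (I := htI M) in *.
  set (ge0 := fun _ : nat => cval I (num PT 0)).
  set (ie0 := fun _ : nat => exist (isInt I) (cval I (num PT 0)) (cval_int I 0)).
  assert (HStd : forall G : form1 PT Nm, no_atoms G -> closed G ->
     (forall J, standard_interp J -> sat_cl_sent J G) -> sat_ht M ge0 ie0 G).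
  { intros G H1 H2 H3. apply Hsat. left. split; auto. }
  assert (cinj : forall c c', cval I c = cval I c' -> c = c').
  { intros c c' E. destruct (classic (c = c')) as [|Hne]; auto. exfalso.
    assert (K := HStd (FNeg (FEq (GConst c) (GConst c')))).
    simpl in K. destruct K as [_ K]; auto.
    - split; reflexivity.
    - intros J HJ ge ie. simpl. destruct HJ as [_ [JC _]]. rewrite !JC. auto. }
  set (h := fun d => proj1_sig (constructive_indefinite_description _ (Hsurj d))).
  assert (hK : forall d, cval I (h d) = d).
  { intro d. unfold h. destruct (constructive_indefinite_description _ _). auto. }
  assert (hC : forall c, h (cval I c) = c).
  { intro c. apply cinj. apply hK. }
  assert (Cmp : forall o c c', fcmp I o (cval I c) (cval I c') <-> stdcmp PT o c c').
  { intros o c c'. destruct (classic (stdcmp PT o c c')) as [Hy | Hn].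
    - split; auto. intros _.
      assert (K := HStd (FCmp o (GConst c) (GConst c'))). simpl in K. apply K; auto.
      + split; reflexivity.
      + intros J HJ ge ie. simpl. pose proof HJ as [_ [JC _]]. rewrite !JC.
        apply std_interp_cmp; auto.
    - split; [|tauto]. intro Hf. exfalso.
      assert (K := HStd (FNeg (FCmp o (GConst c) (GConst c')))). simpl in K.
      destruct K as [_ K]; auto.
      + split; reflexivity.
      + intros J HJ ge ie. simpl. pose proof HJ as [_ [JC _]]. rewrite !JC.
        rewrite std_interp_cmp; auto. }
  assert (Aabs : forall n, proj1_sig (fabs I (exist _ (cval I (num PT n)) (cval_int I n))) = cval I (num PT (Z.abs n))).
  { intro n. assert (K := HStd (FEq (GInt (IAbs (INum n))) (GInt (INum (Z.abs n))))). simpl in K. apply K.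
    - simpl; trivial.
    - split; reflexivity.
    - intros J Hst ge ie; simpl. destruct Hst as [_ [JC [JA _]]]. rewrite JC. apply JA. simpl. apply JC. }
  assert (Aplus : forall m n, proj1_sig (fplus I (exist _ (cval I (num PT m)) (cval_int I m)) (exist _ (cval I (num PT n)) (cval_int I n))) = cval I (num PT (m + n))).
  { intros m n. assert (K := HStd (FEq (GInt (IPlus (INum m) (INum n))) (GInt (INum (m + n))))). simpl in K. apply K.
    - simpl; trivial.
    - split; reflexivity.
    - intros J Hst ge ie; simpl. destruct Hst as [_ [JC [_ [JP _]]]]. rewrite JC. apply JP; simpl; apply JC. }
  assert (Aminus : forall m n, proj1_sig (fminus I (exist _ (cval I (num PT m)) (cval_int I m)) (exist _ (cval I (num PT n)) (cval_int I n))) = cval I (num PT (m - n))).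
  { intros m n. assert (K := HStd (FEq (GInt (IMinus (INum m) (INum n))) (GInt (INum (m - n))))). simpl in K. apply K.
    - simpl; trivial.
    - split; reflexivity.
    - intros J Hst ge ie; simpl. destruct Hst as [_ [JC [_ [_ [JP _]]]]]. rewrite JC. apply JP; simpl; apply JC. }
  assert (Atimes : forall m n, proj1_sig (ftimes I (exist _ (cval I (num PT m)) (cval_int I m)) (exist _ (cval I (num PT n)) (cval_int I n))) = cval I (num PT (m * n))).
  { intros m n. assert (K := HStd (FEq (GInt (ITimes (INum m) (INum n))) (GInt (INum (m * n))))). simpl in K. apply K.
    - simpl; trivial.
    - split; reflexivity.
    - intros J Hst ge ie; simpl. destruct Hst as [_ [JC [_ [_ [_ [JP _]]]]]]. rewrite JC. apply JP; simpl; apply JC. }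
  assert (Dsplit : forall x : Dint I, exists n, x = exist _ (cval I (num PT n)) (cval_int I n)).
  { intros [xd px]. destruct (Hintom xd px) as [n ->]. exists n. f_equal. apply proof_irrelevance. }
  assert (Hiso : ht_iso M (SM PT Nm D M) h).
  { unfold ht_iso. simpl. split; [|split; [|split; [|split; [|split; [|split; [|split; [|split; [|split]]]]]]]].
    - intros x y E. rewrite <- (hK x), <- (hK y), E. reflexivity.
    - intro y. exists (cval I y). apply hC.
    - intro d. unfold isIntS. split.
      + intro Hd. destruct (Hintom d Hd) as [n ->]. exists n. apply hC.
      + intros [n E]. rewrite <- (hK d), E. apply cval_int.
    - exact hC.
    - intros x x' E. destruct (Dsplit x) as [n ->]. simpl in E. rewrite hC in E.
      simpl. rewrite (getn_eq _ _ _ E). rewrite Aabs, hC. reflexivity.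
    - intros x y x' y' E1 E2. destruct (Dsplit x) as [m ->]. destruct (Dsplit y) as [n ->].
      simpl in E1, E2. rewrite hC in E1, E2.
      simpl. rewrite (getn_eq _ _ _ E1), (getn_eq _ _ _ E2). rewrite Aplus, hC. reflexivity.
    - intros x y x' y' E1 E2. destruct (Dsplit x) as [m ->]. destruct (Dsplit y) as [n ->].
      simpl in E1, E2. rewrite hC in E1, E2.
      simpl. rewrite (getn_eq _ _ _ E1), (getn_eq _ _ _ E2). rewrite Aminus, hC. reflexivity.
    - intros x y x' y' E1 E2. destruct (Dsplit x) as [m ->]. destruct (Dsplit y) as [n ->].
      simpl in E1, E2. rewrite hC in E1, E2.
      simpl. rewrite (getn_eq _ _ _ E1), (getn_eq _ _ _ E2). rewrite Atimes, hC. reflexivity.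
    - intros o d e. pose proof (Cmp o (h d) (h e)) as K. rewrite !hK in K. exact K.
    - intros a ds _ _. rewrite map_map.
      assert (E : map (fun x => cval I (h x)) ds = ds).
      { rewrite <- (map_id ds) at 2. apply map_ext. exact hK. }
      unfold I in E. rewrite E. tauto. }
  exists (SM PT Nm D M). split; [|exists h; exact Hiso].
  split; [apply SI_standard|].
  intros G HG ge' ie'.
  assert (Pi : forall v, isInt I (cval I (proj1_sig (ie' v)))).
  { intro v. destruct (proj2_sig (ie' v)) as [n E]. rewrite E. apply cval_int. }
  set (ie := fun v => exist (isInt I) (cval I (proj1_sig (ie' v))) (Pi v)).
  apply (proj2 (transfer _ _ _ _ _ _ _ Hiso G (wf_Defs _ _ G HG) (fun v => cval I (ge' v)) ge' ie ie'
     (fun v => hC _) (fun v => eq_sym (hC _)))).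
  apply Hsat. right. exact HG.
Qed.

Theorem lemma4 (PT : PTerms) (Nm D : Type) (M : htinterp PT Nm D) :
  (exists S : htinterp PT Nm PT, standard_ht S /\ ht_isomorphic M S) <->
  omega_model M (fun G => Std G \/ Defs G).
Proof.
  split; [apply forward | apply backward].
Qed.
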